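(* Let $a>1$ and $C_j(n,a)=\binom{n}{j}\left(\frac{1+a}{2}\right)^{n-j}\left(\frac{1-a}{2}\right)^j$. Then for every $z\in\mathbb{C}$, $$\lim_{n\to\infty}\sum_{j=0}^nC_j(n,a)\,e^{\frac{iz}{\sqrt2}(1-2j/n)-\frac14(1-2j/n)^2}=e^{\frac{iza}{\sqrt2}-\frac{a^2}{4}},$$ equivalently $\lim_{n\to\infty}\sum_{j=0}^nC_j(n,a)k_{b_j}(z)=k_{-ia/\sqrt2}(z)$ where $b_j=-\frac{i}{\sqrt2}(1-\frac{2j}{n})$.
   Context: For $w\in\mathbb{C}$, $k_w(z)=e^{z\overline{w}-|w|^2/2}$ denotes the normalized reproducing kernel of the Fock space. *)

(* Defs.v *)
From Stdlib Require Import Reals.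
From Coquelicot Require Import Coquelicot.
Open Scope R_scope.

Definition cexp (w : C) : C :=
  (exp (Re w) * cos (Im w), exp (Re w) * sin (Im w)).

Definition Cjna (j n : nat) (a : R) : R :=
  Binomial.C n j * ((1 + a) / 2) ^ (n - j) * ((1 - a) / 2) ^ j.

Definition tjn (j n : nat) : R := 1 - 2 * INR j / INR n.

Definition term (z : C) (j n : nat) : C :=
  cexp (Cplus (Cmult (Cmult Ci z) (RtoC (tjn j n / sqrt 2)))
              (RtoC (- (tjn j n) ^ 2 / 4))).

Definition Ssum (a : R) (z : C) (n : nat) : C :=
  sum_n (fun j => Cmult (RtoC (Cjna j n a)) (term z j n)) n.

(* Main.v *)
Require Import Defs.
From Stdlib Require Import Reals Lra Lia.
From Coquelicot Require Import Coquelicot.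
Open Scope R_scope.

Lemma lim0_bounded (u : nat -> R) : is_lim_seq u 0 -> exists M, forall n, Rabs (u n) <= M.
Proof.
  intros H.
  assert (Ha : is_lim_seq (fun n => Rabs (u n)) 0).
  { replace 0 with (Rabs 0) by apply Rabs_R0. apply (is_lim_seq_abs u 0 H). }
  apply is_lim_seq_Reals in Ha.
  destruct (cauchy_bound _ (CV_Cauchy _ (exist _ 0 Ha))) as [M HM].
  exists M. intros n. apply HM. exists n. reflexivity.
Qed.

Lemma CV_inf (d : nat -> R) : (forall x, ex_pseries d x) -> CV_radius d = p_infty.
Proof.
  intros H.
  assert (Hr : forall r : R, Rbar_le r (CV_radius d)).
  { intros r. destruct (CV_radius_bounded d) as [Hub _].
    apply Hub. destruct (H r) as [l Hl].
    apply is_pseries_R in Hl.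
    destruct (lim0_bounded _ (ex_series_lim_0 _ (ex_intro _ l Hl))) as [M HM].
    exists M. exact HM. }
  destruct (CV_radius d) as [c| |] eqn:E.
  - specialize (Hr (c+1)). simpl in Hr. lra.
  - reflexivity.
  - specialize (Hr 0). simpl in Hr. contradiction.
Qed.

Definition nice (g : R -> R) := exists d : nat -> R, forall x, is_pseries d x (g x).

Lemma nice_CV g : nice g -> exists d, (forall x, is_pseries d x (g x)) /\ CV_radius d = p_infty.
Proof.
  intros [d Hd]. exists d. split; [exact Hd|]. apply CV_inf. intros x. exists (g x). apply Hd.
Qed.

Lemma nice_ext g h : nice g -> (forall x, g x = h x) -> nice h.
Proof. intros [d Hd] E. exists d. intros x. rewrite <- E. auto. Qed.

Lemma nice_mult g h : nice g -> nice h -> nice (fun x => g x * h x).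
Proof.
  intros Hg Hh. destruct (nice_CV g Hg) as [d [Hd Cd]].
  destruct (nice_CV h Hh) as [e [He Ce]].
  exists (PS_mult d e). intros x. apply is_pseries_mult; auto.
  rewrite Cd; exact I. rewrite Ce; exact I.
Qed.

Lemma nice_plus g h : nice g -> nice h -> nice (fun x => g x + h x).
Proof.
  intros [d Hd] [e He]. exists (PS_plus d e). intros x.
  apply (is_pseries_plus d e x (g x) (h x)); auto.
Qed.

Lemma nice_scal c g : nice g -> nice (fun x => c * g x).
Proof.
  intros [d Hd]. exists (PS_scal c d). intros x.
  apply (is_pseries_scal c d x (g x)); auto. apply Rmult_comm.
Qed.

Lemma nice_comp_scale c g : nice g -> nice (fun x => g (c * x)).
Proof.
  intros [d Hd]. exists (fun n => d n * c ^ n). intros x.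
  apply is_pseries_R. specialize (Hd (c * x)). apply is_pseries_R in Hd.
  eapply is_series_ext; [|exact Hd]. intros n. simpl. rewrite Rpow_mult_distr. ring.
Qed.

Definition spread (e o : nat -> R) (n : nat) : R :=
  if Nat.even n then e (Nat.div2 n) else o (Nat.div2 n).

Lemma spread_even e o n : spread e o (2 * n) = e n.
Proof. unfold spread. rewrite Nat.div2_double, Nat.even_mul. reflexivity. Qed.

Lemma spread_odd e o n : spread e o (2 * n + 1) = o n.
Proof.
  unfold spread. rewrite Nat.div2_odd', Nat.even_add, Nat.even_mul. reflexivity.
Qed.

Lemma pseries_zero (y : R) : is_pseries (fun _ => 0) y 0.
Proof.
  apply is_pseries_R. eapply is_series_ext with (a := fun _ => 0).
  intros n. simpl. ring. apply is_series_Reals. intros eps Heps. exists 0%nat.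
  intros n _. rewrite sum_cte. unfold Rdist. rewrite Rmult_0_l, Rminus_0_r, Rabs_R0. exact Heps.
Qed.

Lemma nice_comp_sq g : nice g -> nice (fun x => g (x ^ 2)).
Proof.
  intros [d Hd]. exists (spread d (fun _ => 0)). intros x.
  replace (g (x^2)) with (g (x^2) + x * 0) by ring.
  apply is_pseries_odd_even.
  - eapply is_pseries_ext; [|apply Hd]. intros n. symmetry. apply spread_even.
  - eapply is_pseries_ext; [|apply pseries_zero]. intros n. symmetry. apply spread_odd.
Qed.

Lemma nice_exp : nice exp.
Proof. exists (fun n => / INR (Factorial.fact n)). apply is_exp_Reals. Qed.

Lemma nice_cos : nice cos.
Proof.
  exists (spread cos_n (fun _ => 0)). intros x.
  unfold cos. destruct (exist_cos (Rsqr x)) as [l Hl].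
  replace l with (l + x * 0) by ring.
  apply is_pseries_odd_even.
  - eapply is_pseries_ext with (a := cos_n). intros n. symmetry. apply spread_even.
    apply is_pseries_Reals. replace (x^2) with (Rsqr x) by (unfold Rsqr; ring). exact Hl.
  - eapply is_pseries_ext; [|apply pseries_zero]. intros n. symmetry. apply spread_odd.
Qed.

Lemma nice_sin : nice sin.
Proof.
  exists (spread (fun _ => 0) sin_n). intros x.
  unfold sin. destruct (exist_sin (Rsqr x)) as [l Hl].
  replace (x * l) with (0 + x * l) by ring.
  apply is_pseries_odd_even.
  - eapply is_pseries_ext; [|apply pseries_zero]. intros n. symmetry. apply spread_even.
  - eapply is_pseries_ext with (a := sin_n). intros n. symmetry. apply spread_odd.
    apply is_pseries_Reals. replace (x^2) with (Rsqr x) by (unfold Rsqr; ring). exact Hl.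
Qed.

Lemma C_n0 n : Binomial.C n 0 = 1.
Proof. unfold Binomial.C. rewrite Nat.sub_0_r. simpl. field. apply INR_fact_neq_0. Qed.
Lemma C_nn n : Binomial.C n n = 1.
Proof. unfold Binomial.C. rewrite Nat.sub_diag. simpl. field. apply INR_fact_neq_0. Qed.
Lemma C_ge0 n k : 0 <= Binomial.C n k.
Proof.
  unfold Binomial.C. unfold Rdiv. apply Rmult_le_pos. apply pos_INR.
  left. apply Rinv_0_lt_compat. apply Rmult_lt_0_compat; apply INR_fact_lt_0.
Qed.

Lemma pascal_sum (A : nat -> R) m :
  sum_f_R0 (fun j => Binomial.C (S m) j * A j) (S m) =
  sum_f_R0 (fun j => Binomial.C m j * A j) m + sum_f_R0 (fun j => Binomial.C m j * A (S j)) m.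
Proof.
  rewrite decomp_sum by lia. simpl pred.
  destruct m as [|m'].
  - simpl. rewrite !C_n0. replace (Binomial.C 1 1) with 1 by (symmetry; apply C_nn). ring.
  - rewrite tech5.
    rewrite (decomp_sum (fun j => Binomial.C (S m') j * A j)) by lia. simpl pred.
    rewrite (tech5 (fun j => Binomial.C (S m') j * A (S j))).
    rewrite !C_n0, !C_nn.
    rewrite (sum_eq (fun i => Binomial.C (S (S m')) (S i) * A (S i))
                    (fun i => Binomial.C (S m') i * A (S i) + Binomial.C (S m') (S i) * A (S i))).
    2:{ intros i Hi. rewrite <- pascal by lia. ring. }
    rewrite plus_sum. ring.
Qed.

Lemma sum_swap (G : nat -> nat -> R) M K :
  sum_f_R0 (fun j => sum_f_R0 (fun i => G j i) K) M =
  sum_f_R0 (fun i => sum_f_R0 (fun j => G j i) M) K.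
Proof.
  induction M as [|M IH].
  - reflexivity.
  - rewrite tech5, IH.
    rewrite (sum_eq (fun i => sum_f_R0 (fun j => G j i) (S M))
                    (fun i => sum_f_R0 (fun j => G j i) M + G (S M) i)).
    2:{ intros i _. apply tech5. }
    rewrite plus_sum. reflexivity.
Qed.

Lemma expand_sum (W X : nat -> R) y m k :
  sum_f_R0 (fun j => W j * (X j + y)^k) m =
  sum_f_R0 (fun i => Binomial.C k i * sum_f_R0 (fun j => W j * X j ^ i) m * y^(k-i)) k.
Proof.
  rewrite (sum_eq _ (fun j => sum_f_R0 (fun i => W j * (Binomial.C k i * X j ^ i * y ^ (k - i))) k)).
  2:{ intros j _. rewrite binomial. rewrite scal_sum. apply sum_eq. intros; ring. }
  rewrite sum_swap. apply sum_eq. intros i _.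
  replace (Binomial.C k i * sum_f_R0 (fun j => W j * X j ^ i) m * y ^ (k - i)) with
    ((Binomial.C k i * y ^ (k - i)) * sum_f_R0 (fun j => W j * X j ^ i) m) by ring.
  rewrite scal_sum. apply sum_eq. intros; ring.
Qed.

Section Mom.
Variable a : R.
Definition pp := (1 + a) / 2.
Definition qq := (1 - a) / 2.
Definition Xv (m j : nat) := INR m - 2 * INR j - a * INR m.
Definition Ct (m k : nat) :=
  sum_f_R0 (fun j => Binomial.C m j * pp ^ (m - j) * qq ^ j * Xv m j ^ k) m.
Definition F (i : nat) := pp * (1 - a) ^ i + qq * (-1 - a) ^ i.

Lemma Ct_rec m k : Ct (S m) k = sum_f_R0 (fun i => Binomial.C k i * Ct m i * F (k - i)) k.
Proof.
  unfold Ct.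
  rewrite (sum_eq _ (fun j => Binomial.C (S m) j * (pp ^ (S m - j) * qq ^ j * Xv (S m) j ^ k)))
    by (intros; ring).
  rewrite pascal_sum.
  rewrite (sum_eq (fun j => Binomial.C m j * (pp ^ (S m - j) * qq ^ j * Xv (S m) j ^ k))
             (fun j => (pp * (Binomial.C m j * pp ^ (m - j) * qq ^ j)) * (Xv m j + (1 - a)) ^ k)).
  2:{ intros j Hj. replace (S m - j)%nat with (S (m - j)) by lia. simpl pow.
      unfold Xv. rewrite S_INR. replace (INR m + 1 - 2 * INR j - a * (INR m + 1))
        with (INR m - 2 * INR j - a * INR m + (1 - a)) by ring. ring. }
  rewrite (sum_eq (fun j => Binomial.C m j * (pp ^ (S m - S j) * qq ^ S j * Xv (S m) (S j) ^ k))
             (fun j => (qq * (Binomial.C m j * pp ^ (m - j) * qq ^ j)) * (Xv m j + (-1 - a)) ^ k)).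
  2:{ intros j Hj. replace (S m - S j)%nat with (m - j)%nat by lia. simpl pow.
      unfold Xv. rewrite !S_INR. replace (INR m + 1 - 2 * (INR j + 1) - a * (INR m + 1))
        with (INR m - 2 * INR j - a * INR m + (-1 - a)) by ring. ring. }
  rewrite !expand_sum. rewrite <- plus_sum. apply sum_eq. intros i _.
  unfold F.
  rewrite (sum_eq (fun j => pp * (Binomial.C m j * pp ^ (m - j) * qq ^ j) * Xv m j ^ i)
     (fun j => (Binomial.C m j * pp ^ (m - j) * qq ^ j * Xv m j ^ i) * pp)) by (intros; ring).
  rewrite (sum_eq (fun j => qq * (Binomial.C m j * pp ^ (m - j) * qq ^ j) * Xv m j ^ i)
     (fun j => (Binomial.C m j * pp ^ (m - j) * qq ^ j * Xv m j ^ i) * qq)) by (intros; ring).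
  rewrite <- !scal_sum. ring.
Qed.

Lemma F0 : F 0 = 1.
Proof. unfold F, pp, qq. simpl. field. Qed.
Lemma F1 : F 1 = 0.
Proof. unfold F, pp, qq. simpl. field. Qed.

Lemma Ct_0 m : Ct m 0 = 1.
Proof.
  induction m as [|m IH].
  - unfold Ct. simpl. rewrite C_n0. ring.
  - rewrite Ct_rec. simpl. rewrite IH, C_n0, F0. ring.
Qed.

Lemma Ct_1 m : Ct m 1 = 0.
Proof.
  induction m as [|m IH].
  - unfold Ct, Xv. simpl. ring.
  - rewrite Ct_rec. simpl. rewrite IH, F1. ring.
Qed.

Lemma Ct_zero_m k : Ct 0 (S k) = 0.
Proof. unfold Ct, Xv. simpl. ring. Qed.

Hypothesis ha : 1 < a.
Definition cc := (1 + a) ^ 2.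

Lemma cc_ge1 : 1 <= cc.
Proof. unfold cc. simpl. nra. Qed.

Lemma F_bound i : Rabs (F i) <= cc ^ i.
Proof.
  destruct i as [|i].
  - rewrite F0, Rabs_R1. simpl. lra.
  - unfold F. eapply Rle_trans. apply Rabs_triang.
    rewrite !Rabs_mult, <- !RPow_abs.
    assert (Hp : Rabs pp = (1 + a) / 2) by (unfold pp; apply Rabs_pos_eq; lra).
    assert (Hq : Rabs qq = (a - 1) / 2) by (unfold qq; rewrite Rabs_left; lra).
    assert (H1 : Rabs (1 - a) = a - 1) by (rewrite Rabs_left; lra).
    assert (H2 : Rabs (-1 - a) = 1 + a) by (rewrite Rabs_left; lra).
    rewrite Hp, Hq, H1, H2.
    assert (Hpow : (a - 1) ^ S i <= (1 + a) ^ S i) by (apply pow_incr; lra).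
    assert (Hpos : 0 <= (a - 1) ^ S i) by (apply pow_le; lra).
    assert (Ha1 : 1 + a <= (1 + a) ^ S i).
    { rewrite <- (pow_1 (1 + a)) at 1. apply Rle_pow; lia || lra. }
    unfold cc. rewrite <- pow_mult. replace (2 * S i)%nat with (S i + S i)%nat by lia.
    rewrite pow_add.
    assert (0 <= (1 + a) ^ S i) by (apply pow_le; lra).
    nra.
Qed.

Lemma Ct_unif m k : Rabs (Ct m k) <= (cc * INR m) ^ k.
Proof.
  revert k. induction m as [|m IH]; intros k.
  - unfold Ct, Xv. simpl. rewrite C_n0.
    replace (1 * 1 * 1 * (0 - 2 * 0 - a * 0) ^ k) with (0 ^ k)
      by (replace (0 - 2*0 - a*0) with 0 by ring; ring).
    replace (cc * 0) with 0 by ring.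
    rewrite Rabs_pos_eq. lra. apply pow_le. lra.
  - rewrite Ct_rec. eapply Rle_trans. apply sum_f_R0_triangle.
    rewrite S_INR.
    replace (cc * (INR m + 1)) with (cc * INR m + cc) by ring.
    rewrite binomial. apply sum_Rle. intros i Hi.
    rewrite !Rabs_mult. rewrite (Rabs_pos_eq (Binomial.C k i)) by apply C_ge0.
    rewrite !Rmult_assoc. apply Rmult_le_compat_l. apply C_ge0.
    apply Rmult_le_compat; try apply Rabs_pos. apply IH. apply F_bound.
Qed.

Lemma binom_le k : sum_f_R0 (fun i => Binomial.C (S k) i * cc ^ (S k - i)) k <= (1 + cc) ^ S k.
Proof.
  rewrite binomial. rewrite tech5.
  assert (0 <= Binomial.C (S k) (S k) * 1 ^ S k * cc ^ (S k - S k)).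
  { apply Rmult_le_pos. apply Rmult_le_pos. apply C_ge0. apply pow_le; lra.
    apply pow_le. pose proof cc_ge1; lra. }
  assert (sum_f_R0 (fun i => Binomial.C (S k) i * cc ^ (S k - i)) k =
          sum_f_R0 (fun i => Binomial.C (S k) i * 1 ^ i * cc ^ (S k - i)) k).
  { apply sum_eq. intros. rewrite pow1. ring. }
  lra.
Qed.

Lemma Ct_decay k : exists K, 1 <= K /\ forall i m, (i <= k)%nat ->
  Rabs (Ct m i) <= K * INR (S m) ^ (i - 1).
Proof.
  induction k as [|k [K [HK IH]]].
  - exists 1. split. lra. intros i m Hi. replace i with 0%nat by lia.
    rewrite Ct_0. simpl. rewrite Rabs_R1. lra.
  - destruct k as [|k'].
    + exists K. split. lra. intros i m Hi.
      destruct (Nat.eq_dec i 1) as [->|Hne].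
      * rewrite Ct_1, Rabs_R0. apply Rmult_le_pos. lra. apply pow_le. apply pos_INR.
      * apply IH. lia.
    + set (k := S k').
      set (L := K * (1 + cc) ^ S k).
      assert (HL : K <= L).
      { unfold L. rewrite <- (Rmult_1_r K) at 1. apply Rmult_le_compat_l. lra.
        apply pow_R1_Rle. pose proof cc_ge1; lra. }
      assert (Hm : forall m, Rabs (Ct m (S k)) <= L * INR m * INR (S m) ^ (k - 1)).
      { induction m as [|m IHm].
        - rewrite Ct_zero_m, Rabs_R0. simpl. lra.
        - rewrite Ct_rec. rewrite tech5. rewrite C_nn, Nat.sub_diag, F0.
          assert (Hs : Rabs (sum_f_R0 (fun i => Binomial.C (S k) i * Ct m i * F (S k - i)) k)
                       <= L * INR (S m) ^ (k - 1)).
          { eapply Rle_trans. apply sum_f_R0_triangle.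
            eapply Rle_trans with (sum_f_R0 (fun i => (K * INR (S m) ^ (k - 1)) * (Binomial.C (S k) i * cc ^ (S k - i))) k).
            - apply sum_Rle. intros i Hi.
              rewrite !Rabs_mult. rewrite (Rabs_pos_eq (Binomial.C (S k) i)) by apply C_ge0.
              destruct (Nat.eq_dec i k) as [->|Hne].
              + replace (S k - k)%nat with 1%nat by lia. rewrite F1, Rabs_R0, Rmult_0_r.
                apply Rmult_le_pos. apply Rmult_le_pos. lra. apply pow_le. apply pos_INR.
                apply Rmult_le_pos. apply C_ge0. apply pow_le. pose proof cc_ge1; lra.
              + assert (Hc : Rabs (Ct m i) <= K * INR (S m) ^ (k - 1)).
                { eapply Rle_trans. apply IH. lia. apply Rmult_le_compat_l. lra.
                  apply Rle_pow. rewrite S_INR. pose proof (pos_INR m). lra. lia. }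
                assert (HC := C_ge0 (S k) i).
                assert (HF := F_bound (S k - i)).
                assert (0 <= Rabs (Ct m i)) by apply Rabs_pos.
                assert (0 <= Rabs (F (S k - i))) by apply Rabs_pos.
                assert (0 <= K * INR (S m) ^ (k - 1)).
                { apply Rmult_le_pos. lra. apply pow_le. apply pos_INR. }
                replace (Binomial.C (S k) i * Rabs (Ct m i) * Rabs (F (S k - i))) with
                  (Rabs (Ct m i) * (Binomial.C (S k) i * Rabs (F (S k - i)))) by ring.
                apply Rmult_le_compat; try lra.
                apply Rmult_le_pos; lra.
                apply Rmult_le_compat_l; lra.
            - rewrite (sum_eq _ (fun i => (Binomial.C (S k) i * cc ^ (S k - i)) * (K * INR (S m) ^ (k-1)))) by (intros; ring). rewrite <- scal_sum. unfold L.
              assert (0 <= INR (S m) ^ (k - 1)) by (apply pow_le; apply pos_INR).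
              pose proof (binom_le k).
              replace (K * (1 + cc) ^ S k * INR (S m) ^ (k - 1)) with
                (K * INR (S m) ^ (k - 1) * (1 + cc) ^ S k) by ring.
              apply Rmult_le_compat_l. nra. lra. }
          eapply Rle_trans. apply Rabs_triang. rewrite Rmult_1_r, Rmult_1_l.
          eapply Rle_trans. apply Rplus_le_compat. exact Hs. exact IHm.
          assert (Hk : (k - 1 = k')%nat) by (unfold k; lia).
          rewrite Hk. rewrite !S_INR.
          assert (0 <= INR m) by apply pos_INR.
          assert (P1 : (INR m + 1) ^ k' <= (INR m + 1 + 1) ^ k') by (apply pow_incr; lra).
          assert (0 <= (INR m + 1) ^ k') by (apply pow_le; lra).
          assert (0 <= L) by lra.
          replace (L * (INR m + 1) ^ k' + L * INR m * (INR m + 1) ^ k') with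
            (L * (INR m + 1) * (INR m + 1) ^ k') by ring.
          apply Rmult_le_compat_l. nra. exact P1. }
      exists L. split. lra. intros i m Hi.
      destruct (Nat.eq_dec i (S k)) as [->|Hne].
      * eapply Rle_trans. apply Hm. replace (S k - 1)%nat with (S (k - 1)) by (unfold k; lia).
        replace (INR (S m) ^ S (k - 1)) with (INR (S m) * INR (S m) ^ (k - 1)) by reflexivity. rewrite (S_INR m).
        assert (0 <= INR m) by apply pos_INR.
        assert (0 <= (INR m + 1) ^ (k - 1)) by (apply pow_le; lra).
        assert (0 <= L) by lra. nra.
      * eapply Rle_trans. apply IH. lia. apply Rmult_le_compat_r.
        apply pow_le, pos_INR. exact HL.
Qed.

End Mom.

Lemma lim_inv_n : is_lim_seq (fun n => / INR n) 0.
Proof.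
  replace (Finite 0) with (Rbar_inv p_infty) by reflexivity.
  apply is_lim_seq_inv. apply is_lim_seq_INR. discriminate.
Qed.

Lemma partial_diff (u v : nat -> R) K j :
  (forall k, Rabs (u k) <= v k) ->
  Rabs (sum_f_R0 u (K + j) - sum_f_R0 u K) <= sum_f_R0 v (K + j) - sum_f_R0 v K.
Proof.
  intros H. induction j as [|j IH].
  - rewrite Nat.add_0_r. unfold Rminus. rewrite !Rplus_opp_r, Rabs_R0. lra.
  - rewrite Nat.add_succ_r, !tech5.
    replace (sum_f_R0 u (K + j) + u (S (K + j)) - sum_f_R0 u K) with
      ((sum_f_R0 u (K + j) - sum_f_R0 u K) + u (S (K + j))) by ring.
    eapply Rle_trans. apply Rabs_triang. specialize (H (S (K + j))). lra.
Qed.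

Lemma tail_bound (u v : nat -> R) lu lv K :
  infinite_sum u lu -> infinite_sum v lv -> (forall k, Rabs (u k) <= v k) ->
  Rabs (lu - sum_f_R0 u K) <= lv - sum_f_R0 v K.
Proof.
  intros Hu Hv H. apply Rle_plus_epsilon. intros eps Heps.
  destruct (Hu (eps/2)) as [N1 HN1]. lra.
  destruct (Hv (eps/2)) as [N2 HN2]. lra.
  set (M := (K + (N1 + N2))%nat).
  specialize (HN1 M ltac:(unfold M; lia)). specialize (HN2 M ltac:(unfold M; lia)).
  unfold Rdist in *.
  pose proof (partial_diff u v K (N1 + N2) H). fold M in H0.
  replace (lu - sum_f_R0 u K) with ((lu - sum_f_R0 u M) + (sum_f_R0 u M - sum_f_R0 u K)) by ring.
  eapply Rle_trans. apply Rabs_triang.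
  rewrite Rabs_minus_sym in HN1.
  apply Rabs_def2 in HN2. lra.
Qed.

Lemma tannery (d : nat -> R) (N : nat -> nat -> R) (c : R) (s : nat -> R) :
  ex_series (fun k => Rabs (d k) * c ^ k) ->
  (forall n k, (1 <= n)%nat -> Rabs (N n k) <= c ^ k) ->
  (forall k, (1 <= k)%nat -> is_lim_seq (fun n => N n k) 0) ->
  (forall n, (1 <= n)%nat -> N n 0%nat = 1) ->
  (forall n, (1 <= n)%nat -> is_series (fun k => d k * N n k) (s n)) ->
  is_lim_seq s (d 0%nat).
Proof.
  intros [V HV] Hb Hl H0 Hs.
  assert (Hfin : forall K, is_lim_seq (fun n => sum_f_R0 (fun k => d k * N n k) K) (d 0%nat)).
  { induction K as [|K IH].
    - apply is_lim_seq_ext_loc with (u := fun _ => d 0%nat).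
      exists 1%nat. intros n Hn. simpl. rewrite H0 by lia. ring.
      apply is_lim_seq_const.
    - replace (d 0%nat) with (d 0%nat + d (S K) * 0) by ring.
      apply is_lim_seq_ext with (u := fun n => sum_f_R0 (fun k => d k * N n k) K + d (S K) * N n (S K)).
      intros n. rewrite tech5. reflexivity.
      apply is_lim_seq_plus'. exact IH.
      apply (is_lim_seq_scal_l _ (d (S K)) 0). apply Hl. lia. }
  apply is_series_Reals in HV.
  apply is_lim_seq_Reals. intros eps Heps.
  destruct (HV (eps/2)) as [K HK]. lra.
  specialize (HK K (le_n K)). unfold Rdist in HK.
  specialize (Hfin K). apply is_lim_seq_Reals in Hfin.
  destruct (Hfin (eps/2)) as [N0 HN0]. lra.
  exists (max N0 1). intros n Hn.
  specialize (HN0 n ltac:(lia)). unfold Rdist in *.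
  assert (Ht := tail_bound (fun k => d k * N n k) (fun k => Rabs (d k) * c ^ k) (s n) V K).
  assert (Hn1 : (1 <= n)%nat) by lia.
  specialize (Ht (proj1 (is_series_Reals _ _) (Hs n Hn1)) HV).
  assert (Hk : forall k, Rabs (d k * N n k) <= Rabs (d k) * c ^ k).
  { intros k. rewrite Rabs_mult. apply Rmult_le_compat_l. apply Rabs_pos. apply Hb. exact Hn1. }
  specialize (Ht Hk).
  replace (s n - d 0%nat) with ((s n - sum_f_R0 (fun k => d k * N n k) K) +
     (sum_f_R0 (fun k => d k * N n k) K - d 0%nat)) by ring.
  eapply Rle_lt_trans. apply Rabs_triang.
  rewrite Rabs_minus_sym in HK.
  assert (HK' : V - sum_f_R0 (fun k => Rabs (d k) * c ^ k) K < eps / 2).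
  { eapply Rle_lt_trans. apply Rle_abs. exact HK. }
  lra.
Qed.

Definition wfun (z : C) (t : R) : C :=
  Cplus (Cmult (Cmult Ci z) (RtoC (t / sqrt 2))) (RtoC (- t ^ 2 / 4)).

Lemma Re_wfun z t : Re (wfun z t) = - Im z * (t / sqrt 2) - t ^ 2 / 4.
Proof. unfold wfun, Cplus, Cmult, Ci, RtoC, Re, Im. simpl. unfold Rdiv. ring_simplify. reflexivity. Qed.
Lemma Im_wfun z t : Im (wfun z t) = Re z * (t / sqrt 2).
Proof. unfold wfun, Cplus, Cmult, Ci, RtoC, Re, Im. simpl. unfold Rdiv. ring_simplify. reflexivity. Qed.

Definition gre (z : C) (a u : R) := Re (cexp (wfun z (a + u))).
Definition gim (z : C) (a u : R) := Im (cexp (wfun z (a + u))).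

Lemma nice_base1 A1 : nice (fun u => exp (A1 * u)).
Proof. apply nice_comp_scale. apply nice_exp. Qed.
Lemma nice_base2 : nice (fun u => exp (-1/4 * u ^ 2)).
Proof. apply (nice_comp_sq (fun v => exp (-1/4 * v))). apply nice_comp_scale. apply nice_exp. Qed.

Lemma nice_gre z a : nice (gre z a).
Proof.
  set (A0 := - Im z * (a / sqrt 2) - a ^ 2 / 4).
  set (A1 := - Im z / sqrt 2 - a / 2).
  set (B0 := Re z * (a / sqrt 2)).
  set (B1 := Re z / sqrt 2).
  apply nice_ext with (g := fun u => exp A0 * ((exp (A1 * u) * exp (-1/4 * u ^ 2)) *
     (cos B0 * cos (B1 * u) + (- sin B0) * sin (B1 * u)))).
  - apply nice_scal. apply nice_mult. apply nice_mult. apply nice_base1. apply nice_base2.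
    apply nice_plus; apply nice_scal; apply nice_comp_scale. apply nice_cos. apply nice_sin.
  - intros u. change (gre z a u) with (exp (Re (wfun z (a+u))) * cos (Im (wfun z (a+u)))).
    rewrite Re_wfun, Im_wfun.
    replace (- Im z * ((a + u) / sqrt 2) - (a + u) ^ 2 / 4) with (A0 + (A1 * u + -1/4 * u^2))
      by (unfold A0, A1; field; apply Rgt_not_eq, Rlt_gt, sqrt_lt_R0; lra).
    replace (Re z * ((a + u) / sqrt 2)) with (B0 + B1 * u)
      by (unfold B0, B1; field; apply Rgt_not_eq, Rlt_gt, sqrt_lt_R0; lra).
    rewrite !exp_plus, cos_plus. ring.
Qed.

Lemma nice_gim z a : nice (gim z a).
Proof.
  set (A0 := - Im z * (a / sqrt 2) - a ^ 2 / 4).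
  set (A1 := - Im z / sqrt 2 - a / 2).
  set (B0 := Re z * (a / sqrt 2)).
  set (B1 := Re z / sqrt 2).
  apply nice_ext with (g := fun u => exp A0 * ((exp (A1 * u) * exp (-1/4 * u ^ 2)) *
     (sin B0 * cos (B1 * u) + cos B0 * sin (B1 * u)))).
  - apply nice_scal. apply nice_mult. apply nice_mult. apply nice_base1. apply nice_base2.
    apply nice_plus; apply nice_scal; apply nice_comp_scale. apply nice_cos. apply nice_sin.
  - intros u. change (gim z a u) with (exp (Re (wfun z (a+u))) * sin (Im (wfun z (a+u)))).
    rewrite Re_wfun, Im_wfun.
    replace (- Im z * ((a + u) / sqrt 2) - (a + u) ^ 2 / 4) with (A0 + (A1 * u + -1/4 * u^2))
      by (unfold A0, A1; field; apply Rgt_not_eq, Rlt_gt, sqrt_lt_R0; lra).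
    replace (Re z * ((a + u) / sqrt 2)) with (B0 + B1 * u)
      by (unfold B0, B1; field; apply Rgt_not_eq, Rlt_gt, sqrt_lt_R0; lra).
    rewrite !exp_plus, sin_plus. ring.
Qed.

Lemma Clim_split (u : nat -> C) (l : C) :
  is_lim_seq (fun n => Re (u n)) (Re l) -> is_lim_seq (fun n => Im (u n)) (Im l) ->
  filterlim u eventually (locally l).
Proof.
  intros H1 H2 P [eps HP].
  apply is_lim_seq_Reals in H1. apply is_lim_seq_Reals in H2.
  destruct (H1 eps (cond_pos eps)) as [N1 HN1].
  destruct (H2 eps (cond_pos eps)) as [N2 HN2].
  exists (max N1 N2). intros n Hn. apply HP.
  split; unfold ball; simpl; unfold AbsRing_ball, abs, minus, plus, opp; simpl.
  - specialize (HN1 n ltac:(lia)). exact HN1.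
  - specialize (HN2 n ltac:(lia)). exact HN2.
Qed.

Definition Nm (a : R) (n k : nat) :=
  sum_f_R0 (fun j => Cjna j n a * (tjn j n - a) ^ k) n.

Lemma Nm_eq a n k : (1 <= n)%nat -> Nm a n k = Ct a n k * (/ INR n) ^ k.
Proof.
  intros Hn. unfold Nm, Ct. rewrite Rmult_comm, scal_sum. apply sum_eq. intros j Hj.
  unfold Cjna, pp, qq, Xv, tjn.
  assert (INR n <> 0) by (apply not_0_INR; lia).
  replace (1 - 2 * INR j / INR n - a) with ((INR n - 2 * INR j - a * INR n) * / INR n)
    by (field; auto).
  rewrite Rpow_mult_distr. ring.
Qed.

Lemma Nm_bound a (ha : 1 < a) n k : (1 <= n)%nat -> Rabs (Nm a n k) <= cc a ^ k.
Proof.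
  intros Hn. rewrite Nm_eq by auto.
  assert (INR n <> 0) by (apply not_0_INR; lia).
  assert (0 < INR n) by (apply lt_0_INR; lia).
  rewrite Rabs_mult, <- RPow_abs, Rabs_inv, (Rabs_pos_eq (INR n)) by lra.
  eapply Rle_trans. apply Rmult_le_compat_r. apply pow_le. left. apply Rinv_0_lt_compat. lra.
  apply Ct_unif. exact ha.
  rewrite <- Rpow_mult_distr. right. f_equal. field. auto.
Qed.

Lemma Nm_0 a n : (1 <= n)%nat -> Nm a n 0 = 1.
Proof. intros Hn. rewrite Nm_eq by auto. rewrite Ct_0. simpl. ring. Qed.

Lemma Nm_lim a (ha : 1 < a) k : (1 <= k)%nat -> is_lim_seq (fun n => Nm a n k) 0.
Proof.
  intros Hk. destruct (Ct_decay a ha k) as [K [HK HD]].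
  set (B := K * 2 ^ (k - 1)).
  apply is_lim_seq_le_le_loc with (u := fun n => - B * / INR n) (w := fun n => B * / INR n).
  - exists 1%nat. intros n Hn.
    assert (0 < INR n) by (apply lt_0_INR; lia).
    assert (1 <= INR n) by (apply (le_INR 1); lia).
    rewrite Nm_eq by auto.
    assert (H1 : Rabs (Ct a n k * (/ INR n) ^ k) <= B * / INR n).
    { rewrite Rabs_mult, <- RPow_abs, Rabs_inv, (Rabs_pos_eq (INR n)) by lra.
      eapply Rle_trans. apply Rmult_le_compat_r. apply pow_le. left. apply Rinv_0_lt_compat. lra.
      apply HD. lia.
      rewrite S_INR.
      assert (Hp : (INR n + 1) ^ (k - 1) <= (2 * INR n) ^ (k - 1)) by (apply pow_incr; lra).
      replace ((/ INR n) ^ k) with ((/ INR n) ^ (k - 1) * / INR n)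
        by (replace k with (S (k - 1)) at 2 by lia; simpl; ring).
      unfold B. rewrite Rpow_mult_distr in Hp.
      assert (E : INR n ^ (k - 1) * (/ INR n) ^ (k - 1) = 1).
      { rewrite <- Rpow_mult_distr, Rinv_r by lra. apply pow1. }
      assert (0 <= (/ INR n) ^ (k - 1)) by (apply pow_le; left; apply Rinv_0_lt_compat; lra).
      assert (0 < / INR n) by (apply Rinv_0_lt_compat; lra).
      assert (0 <= (INR n + 1) ^ (k - 1)) by (apply pow_le; lra).
      apply Rle_trans with (K * (2 ^ (k - 1) * INR n ^ (k - 1)) * ((/ INR n) ^ (k - 1) * / INR n)).
      + apply Rmult_le_compat_r. nra. apply Rmult_le_compat_l. lra. exact Hp.
      + right. replace (K * (2 ^ (k - 1) * INR n ^ (k - 1)) * ((/ INR n) ^ (k - 1) * / INR n))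
          with (K * 2 ^ (k - 1) * (INR n ^ (k - 1) * (/ INR n) ^ (k - 1)) * / INR n) by ring.
        rewrite E. ring. }
    pose proof (Rle_abs (Ct a n k * (/ INR n) ^ k)) as G1.
    pose proof (Rle_abs (- (Ct a n k * (/ INR n) ^ k))) as G2. rewrite Rabs_Ropp in G2.
    split; lra.
  - replace (Finite 0) with (Rbar_mult (- B) 0) by (simpl; f_equal; ring).
    apply is_lim_seq_scal_l. apply lim_inv_n.
  - replace (Finite 0) with (Rbar_mult B 0) by (simpl; f_equal; ring).
    apply is_lim_seq_scal_l. apply lim_inv_n.
Qed.

Lemma fin_series (G : nat -> nat -> R) (L : nat -> R) M :
  (forall j, is_series (G j) (L j)) ->
  is_series (fun k => sum_f_R0 (fun j => G j k) M) (sum_f_R0 L M).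
Proof.
  intros H. induction M as [|M IH].
  - simpl. apply H.
  - simpl. apply (is_series_plus (fun k => sum_f_R0 (fun j => G j k) M) (G (S M))); auto.
Qed.

Lemma real_lim a (ha : 1 < a) (g : R -> R) : nice g ->
  is_lim_seq (fun n => sum_f_R0 (fun j => Cjna j n a * g (tjn j n - a)) n) (g 0).
Proof.
  intros Hg. destruct (nice_CV g Hg) as [d [Hd Hcv]].
  assert (Hd0 : d 0%nat = g 0).
  { rewrite <- (is_pseries_unique d 0 (g 0) (Hd 0)).
    symmetry. apply is_pseries_unique. apply (is_pseries_0 d). }
  rewrite <- Hd0.
  apply (tannery d (Nm a) (cc a)).
  - assert (Hc : 0 <= cc a) by (unfold cc; apply pow_le; lra).
    assert (Hin := CV_disk_inside d (cc a)). rewrite Hcv in Hin.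
    specialize (Hin I). eapply ex_series_ext; [|exact Hin].
    intros k. simpl. rewrite Rabs_mult, <- RPow_abs, (Rabs_pos_eq (cc a)) by exact Hc. reflexivity.
  - intros. apply Nm_bound; auto.
  - intros. apply Nm_lim; auto.
  - intros. apply Nm_0; auto.
  - intros n Hn.
    eapply is_series_ext; [|apply (fin_series (fun j k => Cjna j n a * (d k * (tjn j n - a) ^ k)))].
    + intros k. simpl. unfold Nm. rewrite scal_sum. apply sum_eq. intros; ring.
    + intros j. apply (is_series_scal_l (Cjna j n a) (fun k => d k * (tjn j n - a) ^ k)).
      apply is_pseries_R. apply Hd.
Qed.

Lemma Re_sum (f : nat -> C) n : Re (sum_n f n) = sum_f_R0 (fun j => Re (f j)) n.
Proof.
  induction n as [|n IH].
  - rewrite sum_O. reflexivity.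
  - rewrite sum_Sn. simpl. rewrite <- IH. reflexivity.
Qed.
Lemma Im_sum (f : nat -> C) n : Im (sum_n f n) = sum_f_R0 (fun j => Im (f j)) n.
Proof.
  induction n as [|n IH].
  - rewrite sum_O. reflexivity.
  - rewrite sum_Sn. simpl. rewrite <- IH. reflexivity.
Qed.

Theorem corollary3p10 (a : R) (ha : 1 < a) (z : C) :
  filterlim (fun n : nat => Ssum a z n) eventually
    (locally (cexp (Cplus (Cmult (Cmult Ci z) (RtoC (a / sqrt 2)))
                          (RtoC (- a ^ 2 / 4))))).
Proof.
  apply Clim_split.
  - apply is_lim_seq_ext with (u := fun n => sum_f_R0 (fun j => Cjna j n a * gre z a (tjn j n - a)) n).
    + intros n. unfold Ssum. rewrite Re_sum. apply sum_eq. intros j _.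
      unfold gre. replace (a + (tjn j n - a)) with (tjn j n) by ring.
      unfold term. fold (wfun z (tjn j n)). simpl. ring.
    + replace (Re (cexp (Cplus (Cmult (Cmult Ci z) (RtoC (a / sqrt 2))) (RtoC (- a ^ 2 / 4)))))
        with (gre z a 0) by (unfold gre; rewrite Rplus_0_r; reflexivity).
      apply real_lim. exact ha. apply nice_gre.
  - apply is_lim_seq_ext with (u := fun n => sum_f_R0 (fun j => Cjna j n a * gim z a (tjn j n - a)) n).
    + intros n. unfold Ssum. rewrite Im_sum. apply sum_eq. intros j _.
      unfold gim. replace (a + (tjn j n - a)) with (tjn j n) by ring.
      unfold term. fold (wfun z (tjn j n)). simpl. ring.
    + replace (Im (cexp (Cplus (Cmult (Cmult Ci z) (RtoC (a / sqrt 2))) (RtoC (- a ^ 2 / 4)))))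
        with (gim z a 0) by (unfold gim; rewrite Rplus_0_r; reflexivity).
      apply real_lim. exact ha. apply nice_gim.
Qed.
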